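(* Let $k\geq 1$ and let $T$ be a $2k$-strong tournament such that for every two distinct vertices $x,y$ of $T$ there is a path of length 2 between $x$ and $y$ (i.e. a vertex $z$ with $x\to z\to y$ or $y\to z\to x$). Then $T$ is $(k+2)^{*}$-weakly connected.
   Context: A tournament is a digraph in which each pair of distinct vertices is joined by exactly one arc; $a\to b$ means $a$ dominates $b$ (i.e. $ab$ is an arc). A digraph is $m$-strong if it has more than $m$ vertices and remains strongly connected after deleting any set of fewer than $m$ vertices. For distinct vertices $u,v$ of a digraph $D$, a weak $k^{*}$-container between $u$ and $v$ is a set of $k$ internally disjoint paths, each of which is either a $(u,v)$-path or a $(v,u)$-path (different paths may have different directions), whose union contains every vertex of $D$. $D$ is $k^{*}$-weakly connected if there is a weak $k^{*}$-container between every two distinct vertices of $D$. *)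

(* Defs.v *)
(* A digraph on a finite vertex type V is given by its arc
   relation arc : rel V ("arc a b" means a dominates b). *)
From mathcomp Require Import all_boot.
Set Implicit Arguments. Unset Strict Implicit. Unset Printing Implicit Defensive.

Section Digraphs.
Variables (V : finType) (arc : rel V).

Definition tournament : Prop :=
  (forall x, ~~ arc x x) /\
  (forall x y, x != y -> (arc x y || arc y x) /\ ~~ (arc x y && arc y x)).

Definition strong_avoiding (S : {set V}) : Prop :=
  forall x y, x \notin S -> y \notin S ->
    connect [rel a b | [&& arc a b, a \notin S & b \notin S]] x y.

Definition m_strong (m : nat) : Prop :=
  m < #|V| /\ forall S : {set V}, #|S| < m -> strong_avoiding S.

Definition is_dipath (a b : V) (p : seq V) : bool :=
  if p is x :: q then [&& x == a, path arc x q, uniq p & last x q == b]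
  else false.

Definition weak_container (k : nat) (u v : V) : Prop :=
  exists P : 'I_k -> seq V,
    [/\ forall i, is_dipath u v (P i) || is_dipath v u (P i),
        forall i j, i != j -> P i != P j,
        forall i j, i != j -> forall x, x \in P i -> x \in P j -> x = u \/ x = v
      & forall x : V, exists i, x \in P i].

Definition weakly_connected_star (k : nat) : Prop :=
  forall u v : V, u != v -> weak_container k u v.

End Digraphs.

(* Main.v *)
Require Import Defs.
From mathcomp Require Import all_boot zify.
Set Implicit Arguments. Unset Strict Implicit. Unset Printing Implicit Defensive.

Section Closure.
Variable (V : finType).
Lemma connect_fwd (e : rel V) (Z : pred V) :
  (forall a b, e a b -> Z a -> Z b) -> forall x y, connect e x y -> Z x -> Z y.
Proof.
move=> cl x y /connectP [p pp ->]; elim: p x pp => [|a p IH] x //= /andP [exa pa] Zx.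
exact: IH pa (cl _ _ exa Zx).
Qed.
Lemma connect_bwd (e : rel V) (Z : pred V) :
  (forall a b, e a b -> Z b -> Z a) -> forall x y, connect e x y -> Z y -> Z x.
Proof.
move=> cl x y /connectP [p pp ->]; elim: p x pp => [|a p IH] x //= /andP [exa pa] Zl.
exact: cl _ _ exa (IH _ pa Zl).
Qed.
End Closure.

Section Tour.
Variables (V : finType) (arc : rel V).
Hypothesis tour : tournament arc.

Lemma arc_irr x : arc x x = false.
Proof. by apply/negbTE; case: tour. Qed.
Lemma arc_tot x y : x != y -> arc x y || arc y x.
Proof. by case: tour => _ h /h []. Qed.
Lemma arc_asym x y : arc x y -> arc y x -> False.
Proof.
case: (eqVneq x y) => [-> |ne]; first by rewrite arc_irr.
by case: tour => _ /(_ _ _ ne) [_ /negP h] a b; apply: h; rewrite a b.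
Qed.
Lemma arc_neq x y : arc x y -> x != y.
Proof. by apply: contraTneq => ->; rewrite arc_irr. Qed.
Lemma arc_nrev x y : x != y -> ~~ arc x y -> arc y x.
Proof. by move=> ne na; case/orP: (arc_tot ne) => // h; rewrite h in na. Qed.

Lemma split1 w : forall s h, arc h w -> (exists2 z, z \in s & arc w z) ->
  w \notin h :: s -> exists t1 t2, [/\ h :: s = t1 ++ t2, t1 != [::], t2 != [::],
  arc (last w t1) w & arc w (head w t2)].
Proof.
elim=> [|a s IH] h hw [z zs wz] //= wn.
have wa : w != a by apply: contraNneq wn => ->; rewrite !inE eqxx orbT.
case haw: (arc w a).
  by exists [:: h], (a :: s).
have aw : arc a w by apply: arc_nrev; rewrite ?haw // eq_sym.
have zs' : z \in s.
  move: zs; rewrite inE => /orP [/eqP zeq|//]; by rewrite -zeq wz in haw.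
have wn' : w \notin a :: s by move: wn; rewrite inE negb_or => /andP [].
have [t1 [t2 [e n1 n2 l1 h2]]] := IH a aw (ex_intro2 _ _ z zs' wz) wn'.
exists (h :: t1), t2; split => //; first by rewrite e.
by case: t1 {e} n1 l1.
Qed.

Lemma split2 w : forall s1 s2, s1 != [::] -> (exists2 x, x \in s1 & arc x w) ->
  (exists2 z, z \in s2 & arc w z) -> w \notin s1 ++ s2 ->
  exists t1 t2, [/\ s1 ++ s2 = t1 ++ t2, t1 != [::], t2 != [::],
  arc (last w t1) w & arc w (head w t2)].
Proof.
elim=> [|a s1 IH] s2 // _ [x xs xw] hz wn.
case hs: (has (fun y => arc y w) s1).
  case/hasP: hs => y ys yw.
  have ne : s1 != [::] by case: s1 ys {IH xs wn}.
  have wn' : w \notin s1 ++ s2 by move: wn; rewrite cat_cons inE negb_or => /andP [].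
  have [t1 [t2 [e n1 n2 l1 h2]]] := IH s2 ne (ex_intro2 _ _ y ys yw) hz wn'.
  exists (a :: t1), t2; split => //; first by rewrite /= e.
  by case: t1 {e} n1 l1.
have ax : x = a.
  move: xs; rewrite inE => /orP [/eqP //|ys].
  by move/hasP: hs => hs; case: hs; exists x.
subst x; clear xs.
case: s1 IH hs wn => [|b s1] _ hs wn.
  exact: split1.
have wb : w != b by apply: contraNneq wn => ->; rewrite !inE eqxx orbT.
have bw : arc w b.
  apply: arc_nrev; first by rewrite eq_sym.
  by move: hs => /= /norP [].
by exists [:: a], (b :: s1 ++ s2).
Qed.

Lemma ins_dipath a b w t1 t2 : is_dipath arc a b (t1 ++ t2) -> t1 != [::] -> t2 != [::] ->
  arc (last w t1) w -> arc w (head w t2) -> w \notin t1 ++ t2 ->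
  is_dipath arc a b (t1 ++ w :: t2).
Proof.
case: t1 => [|x t1] //; case: t2 => [|y t2] // /=.
move=> /and4P [xa pp uq lb] _ _ l1 h2 wn.
apply/and4P; split => //.
- move: pp; rewrite !cat_path /= => /andP [-> /andP [_ ->]].
  by rewrite andbT h2 andbT; case: t1 l1 {uq lb wn}.
- have: perm_eq (x :: t1 ++ w :: y :: t2) (w :: x :: t1 ++ y :: t2).
    by rewrite -cat_cons (perm_catCA (x :: t1) [:: w] (y :: t2)).
  move/perm_uniq; rewrite /= => ->; by rewrite uq andbT.
- by move: lb; rewrite !last_cat.
Qed.

End Tour.
Section UV.
Variables (V : finType) (arc : rel V).
Hypothesis tour : tournament arc.
Variables (u v : V) (k : nat).
Hypothesis huv : arc u v.
Hypothesis hk : 0 < k.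
Hypothesis strong : forall S : {set V}, #|S| < 2 * k -> strong_avoiding arc S.
Hypothesis two : exists z, (arc u z && arc z v) || (arc v z && arc z u).

Definition tA w := arc u w && arc w v.
Definition tB w := arc v w && arc w u.
Definition tC w := arc u w && arc v w.
Definition tD w := arc w u && arc w v.

Lemma four w : w != u -> w != v -> [|| tA w, tB w, tC w | tD w].
Proof.
move=> wu wv; move: (arc_tot tour wu) (arc_tot tour wv).
rewrite /tA /tB /tC /tD.
by case: (arc w u); case (arc u w); case (arc w v); case (arc v w).
Qed.

Definition good (s : seq V) := is_dipath arc u v (u :: s ++ [:: v]) || is_dipath arc v u (v :: s ++ [:: u]).
Definition vu (s : seq V) := is_dipath arc v u (v :: s ++ [:: u]).

Lemma uniq_ends (x y : V) s : uniq (x :: s ++ [:: y]) -> [&& uniq s, x \notin s & y \notin s].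
Proof.
rewrite cats1 cons_uniq rcons_uniq mem_rcons inE negb_or.
by case/andP => /andP [_ ->] /andP [-> ->].
Qed.

Lemma good_facts s : good s -> [&& uniq s, u \notin s & v \notin s].
Proof.
case/orP => /and4P [_ _ /uniq_ends /and3P [-> h1 h2] _]; by rewrite h1 h2.
Qed.

Definition Inv (I : seq (seq V)) := [/\ all good I, all (fun s => s != [::]) I,
  [&& uniq (flatten I), u \notin flatten I & v \notin flatten I],
  size (flatten I) < 2 * size I & (exists b, tB b) -> has vu I].

Lemma Inv_cons s I : Inv I -> good s -> s != [::] ->
  (forall x, x \in s -> x \notin flatten I) -> size s <= 2 -> Inv (s :: I).
Proof.
case=> [ag an /and3P [uf uf' vf'] sz hb] gs sn dj ss.
have /and3P [us un vn] := good_facts gs.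
split => /=; first by rewrite gs.
- by rewrite sn.
- rewrite cat_uniq us uf andbT !mem_cat !negb_or un uf' vn vf' !andbT.
  apply/hasPn => x xf; apply/negP => xs.
  by move: (dj x xs); rewrite xf.
- rewrite size_cat; move: sz; rewrite mulnS; lia.
- by move=> /hb ->; rewrite orbT.
Qed.


Lemma dp3 a w b : arc a w -> arc w b -> a != b -> is_dipath arc a b [:: a; w; b].
Proof.
move=> aw wb ab; rewrite /= aw wb eqxx !inE !negb_or ab (arc_neq tour aw) (arc_neq tour wb) /=.
by rewrite eqxx.
Qed.

Lemma dp4 a c d b : arc a c -> arc c d -> arc d b -> a != d -> a != b -> c != b ->
  is_dipath arc a b [:: a; c; d; b].
Proof.
move=> ac cd db ad ab cb; rewrite /= ac cd db eqxx !inE !negb_or ab ad cb.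
by rewrite (arc_neq tour ac) (arc_neq tour cd) (arc_neq tour db) /= eqxx.
Qed.

Lemma uv_neq : u != v. Proof. exact: (arc_neq tour huv). Qed.

Lemma grow_step I : Inv I -> size I <= k -> exists s, Inv (s :: I).
Proof.
move=> hI sI; have [ag an /and3P [uf uf' vf'] sz hb] := hI.
set X := [set x in flatten I].
have cX : #|X| < 2 * k.
  have h2 : size (flatten I) < 2 * k by lia.
  by apply: leq_ltn_trans h2; rewrite cardsE; apply: card_size.
case: (boolP [exists w, (w \notin flatten I) && (tA w || tB w)]).
  case/existsP => w /andP [wn hw].
  exists [:: w]; apply: Inv_cons => //.
  - case/orP: hw => /andP [h1 h2]; apply/orP; [left|right]; apply: dp3 => //.
      exact: uv_neq.
    by rewrite eq_sym uv_neq.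
  - by move=> x; rewrite inE => /eqP ->.
move=> /existsPn n1.
case: (boolP [exists c, exists d, [&& c \notin flatten I, d \notin flatten I, tC c, tD d & arc c d]]).
  case/existsP => c /existsP [d /and5P [cn dn /andP [uc vc] /andP [du dv] cd]].
  exists [:: c; d]; apply: Inv_cons => //.
  - apply/orP; left; apply: dp4 => //; first by rewrite eq_sym (arc_neq tour du).
      exact: uv_neq.
    by rewrite eq_sym (arc_neq tour vc).
  - by move=> x; rewrite !inE => /orP [] /eqP ->.
move=> /existsPn n2; exfalso.
have vX : v \notin X by rewrite inE.
have uX : u \notin X by rewrite inE.
pose Z := [pred x | (x \notin X) && ((x == v) || tC x)].
have Zu : Z u = false.
  by rewrite /= (negbTE uv_neq) /tC (arc_irr tour) andbF.
suff cl : forall a b, [rel a b | [&& arc a b, a \notin X & b \notin X]] a b -> Z a -> Z b.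
  by have := connect_fwd cl (strong cX vX uX); rewrite Zu /= vX eqxx => /(_ isT).
move=> a b /= /and3P [ab aX bX] /andP [_ ha]; rewrite bX /=.
have bf : b \notin flatten I by move: bX; rewrite inE.
have af : a \notin flatten I by move: aX; rewrite inE.
have nAB : ~~ (tA b || tB b) by move: (n1 b); rewrite bf.
have nCD : ~~ [&& tC a, tD b & arc a b] by move: (n2 a) => /existsPn /(_ b); rewrite af bf.
case/orP: ha => [/eqP ea | hca].
  subst a.
  have bv : b != v by rewrite eq_sym (arc_neq tour ab).
  have bu : b != u by apply/eqP => e; subst b; apply: (arc_asym tour huv ab).
  case/or4P: (four bu bv) => [/andP [_ h]|h|->|/andP [_ h]]; rewrite ?orbT //.
  - by case: (arc_asym tour ab h).
  - by rewrite h orbT in nAB.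
  - by case: (arc_asym tour ab h).
case/andP: (hca) => ua va.
have bu : b != u by apply/eqP => e; subst b; apply: (arc_asym tour ua ab).
have bv : b != v by apply/eqP => e; subst b; apply: (arc_asym tour va ab).
case/or4P: (four bu bv) => [h|h|->|h]; rewrite ?orbT //.
- by rewrite h in nAB.
- by rewrite h orbT in nAB.
- by rewrite hca h ab in nCD.
Qed.

Lemma good1 w : tA w || tB w -> good [:: w].
Proof.
case/orP => /andP [h1 h2]; apply/orP; [left|right]; apply: dp3 => //.
  exact: uv_neq.
by rewrite eq_sym uv_neq.
Qed.

Lemma Inv_single w : tA w || tB w -> (tB w || ~~ [exists b, tB b]) -> Inv [:: [:: w]].
Proof.
move=> hw hb; have /and3P [_ un vn] := good_facts (good1 hw).
split => //=.
- by rewrite good1.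
- by rewrite un vn.
- move=> [b bB]; case/orP: hb => [h|].
    by rewrite orbF; apply: dp3; [case/andP: h|case/andP: h|rewrite eq_sym uv_neq].
  by move/existsPn/(_ b); rewrite bB.
Qed.

Lemma grow j : 0 < j -> j <= k.+1 -> exists I, size I = j /\ Inv I.
Proof.
elim: j => [|j IH] // _ hj.
case: (posnP j) => [-> | jp].
  case: (boolP [exists b, tB b]).
    case/existsP => b hbB; exists [:: [:: b]]; split => //.
    by apply: Inv_single; rewrite hbB ?orbT.
  move=> nb; have [z hz] := two.
  exists [:: [:: z]]; split => //; apply: Inv_single => //; by rewrite nb orbT.
have [I [sI hI]] := IH jp (ltnW hj).
have sk : size I <= k by rewrite sI -ltnS.
have [s hs] := grow_step hI sk.
by exists (s :: I); rewrite /= sI.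
Qed.


Definition Valid (P : 'I_(k+2) -> seq V) :=
  [/\ forall i, is_dipath arc u v (P i) || is_dipath arc v u (P i),
  forall i j, i != j -> forall x, x \in P i -> x \in P j -> x = u \/ x = v,
  forall i j, i != j -> P i != P j,
  exists i, is_dipath arc u v (P i) &
  (exists b, tB b) -> exists i, is_dipath arc v u (P i)].

Definition cover (P : 'I_(k+2) -> seq V) := #|[set x | [exists i, x \in P i]]|.

Lemma replace P i s w : Valid P ->
  (is_dipath arc u v (P i) -> is_dipath arc u v s) ->
  (is_dipath arc v u (P i) -> is_dipath arc v u s) ->
  {subset P i <= s} ->
  (forall x, x \in s -> x \in P i \/ (forall j, x \notin P j)) ->
  w \in s -> (forall j, w \notin P j) ->
  exists P', Valid P' /\ cover P < cover P'.
Proof.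
case=> [hd hdis hdst [i0 hi0] hB] h1 h2 hsub hs ws wn.
pose P' := fun j => if j == i then s else P j.
exists P'; split; first split.
- move=> j; rewrite /P'; case: ifP => [/eqP e|_]; last exact: hd; subst j.
  by case/orP: (hd i) => h; [rewrite h1 | rewrite h2 ?orbT].
- move=> j1 j2 ne x; rewrite /P'.
  case: (eqVneq j1 i) => [e1|n1]; case: (eqVneq j2 i) => [e2|n2].
  + by rewrite e1 e2 eqxx in ne.
  + move=> xs xj; case: (hs x xs) => [xi|xu]; first by apply: (hdis i j2) => //; rewrite -e1.
    by move: (xu j2); rewrite xj.
  + move=> xj xs; case: (hs x xs) => [xi|xu]; first by apply: (hdis j1 i) => //; rewrite -e2.
    by move: (xu j1); rewrite xj.
  + exact: hdis.
- move=> j1 j2 ne; rewrite /P'.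
  case: (eqVneq j1 i) => [e1|n1]; case: (eqVneq j2 i) => [e2|n2].
  + by rewrite e1 e2 eqxx in ne.
  + by apply/eqP => e; move: (wn j2); rewrite -e ws.
  + by apply/eqP => e; move: (wn j1); rewrite e ws.
  + exact: hdst.
- exists i0; rewrite /P'; case: ifP => [/eqP e|//]; subst i0; exact: h1.
- move=> /hB [i1 hi1]; exists i1; rewrite /P'; case: ifP => [/eqP e|//]; subst i1; exact: h2.
apply: proper_card; apply/properP; split.
  apply/subsetP => x; rewrite !inE => /existsP [j xj]; apply/existsP; exists j.
  by rewrite /P'; case: ifP => [/eqP e|//]; subst j; apply: hsub.
exists w; rewrite !inE; last by apply/existsPn => j; exact: wn.
by apply/existsP; exists i; rewrite /P' eqxx.
Qed.

Lemma ins1 P i w (s1 s2 : seq V) : Valid P -> P i = s1 ++ s2 -> s1 != [::] ->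
  (exists2 x, x \in s1 & arc x w) -> (exists2 z, z \in s2 & arc w z) ->
  (forall j, w \notin P j) -> exists P', Valid P' /\ cover P < cover P'.
Proof.
move=> hv e n1 hx hz wn.
have wn' : w \notin s1 ++ s2 by rewrite -e.
have [t1 [t2 [e2 m1 m2 l1 h2]]] := split2 tour n1 hx hz wn'.
rewrite e2 in e wn'.
apply: (replace (i := i) (s := t1 ++ w :: t2) (w := w) hv).
- by rewrite e => h; apply: ins_dipath.
- by rewrite e => h; apply: ins_dipath.
- by move=> x; rewrite e !mem_cat inE => /orP [->|->]; rewrite ?orbT.
- move=> x; rewrite mem_cat inE => /or3P [h|/eqP ->|h]; [left|right|left] => //;
    by rewrite e mem_cat h ?orbT.
- by rewrite mem_cat inE eqxx orbT.
- exact: wn.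
Qed.


Lemma dip_head a b s : is_dipath arc a b s -> exists t, s = a :: t.
Proof. by case: s => [|x t] //= /and4P [/eqP -> _ _ _]; exists t. Qed.

Lemma dip_last a b s x0 : is_dipath arc a b s -> last x0 s = b.
Proof. by case: s => [|x t] //= /and4P [_ _ _ /eqP]. Qed.

Lemma dip_mem a b s : is_dipath arc a b s -> (a \in s) && (b \in s).
Proof.
move=> h; have [t e] := dip_head h.
have hb := dip_last a h; rewrite e mem_head /= -hb e /=; exact: mem_last.
Qed.

Lemma valid_ends P j : Valid P -> (u \in P j) && (v \in P j).
Proof.
case=> [hd _ _ _ _]; case/orP: (hd j) => /dip_mem /andP [-> ->] //.
Qed.

Lemma split_in (s : seq V) y : y \in s -> exists p1 p2, s = p1 ++ y :: p2.
Proof. by case/splitPr => p1 p2; exists p1, p2. Qed.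

Lemma case_c P a b j w y : Valid P -> is_dipath arc a b (P j) -> arc a w ->
  y \in P j -> y != a -> arc w y -> (forall j, w \notin P j) ->
  exists P', Valid P' /\ cover P < cover P'.
Proof.
move=> hv hj aw yin ya wy wn.
have [t e] := dip_head hj.
have yt : y \in t by move: yin; rewrite e inE (negbTE ya).
apply: (ins1 (i := j) (w := w) (s1 := [:: a]) (s2 := t) hv) => //.
- by exists a; rewrite ?inE.
- by exists y.
Qed.

Lemma case_d P a b j w y : Valid P -> is_dipath arc a b (P j) -> arc w b ->
  y \in P j -> y != b -> arc y w -> (forall j, w \notin P j) ->
  exists P', Valid P' /\ cover P < cover P'.
Proof.
move=> hv hj wb yin yb yw wn.
have [p1 [p2 e]] := split_in yin.
have hl := dip_last y hj; rewrite e last_cat /= in hl.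
have bp2 : b \in p2.
  have := mem_last y p2; rewrite hl inE => /orP [/eqP be|//].
  by move: yb; rewrite be eqxx.
apply: (ins1 (i := j) (w := w) (s1 := rcons p1 y) (s2 := p2) hv) => //.
- by rewrite e cat_rcons.
- by rewrite -size_eq0 size_rcons.
- by exists y; rewrite // mem_rcons mem_head.
- by exists b.
Qed.

Definition Unc (P : 'I_(k+2) -> seq V) x := [forall j, x \notin P j].

Lemma case_e P i0 c d : Valid P -> is_dipath arc u v (P i0) -> Unc P c -> Unc P d ->
  tC c -> tD d -> arc c d -> (forall y, ~~ Unc P y -> y != u -> y != v -> ~~ arc y d) ->
  exists P', Valid P' /\ cover P < cover P'.
Proof.
move=> hv hi0 /forallP cn /forallP dn /andP [uc vc] /andP [du dv] cd nd.
have [t e] := dip_head hi0.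
have hi0' := hi0; rewrite e in hi0'.
case: t e hi0' => [|h t'] e /=.
  by case/andP => _ /eqP uv; move: uv_neq; rewrite uv eqxx.
case/and4P => _ /andP [uh pt] uq lv.
have uq' : uniq [:: u, h & t'] by [].
have hin : h \in P i0 by rewrite e !inE eqxx orbT.
have dh : arc d h.
  case: (eqVneq h v) => [->//|hv'].
  have hu : h != u by move: uq; rewrite /= inE negb_or => /andP [/andP [hh _] _]; rewrite eq_sym.
  have hd : h != d by apply/eqP => hd; move: (dn i0); rewrite -hd hin.
  apply: arc_nrev => //; apply: nd => //.
  by apply/forallPn; exists i0; rewrite negbK.
apply: (replace (i := i0) (s := [:: u, c, d, h & t']) (w := c) hv).
- move=> _; rewrite /= eqxx uc cd dh pt lv /= andbT.
  have: perm_eq [:: u, c, d, h & t'] [:: c, d, u, h & t'].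
    by rewrite (perm_catCA [:: u] [:: c; d] (h :: t')).
  move/perm_uniq; rewrite /= => ->.
  have cn0 := cn i0; have dn0 := dn i0; rewrite e in cn0 dn0.
  rewrite [c \in _]inE negb_or (arc_neq tour cd) cn0 dn0 /=; exact: uq.
- by rewrite e /= => /and4P [/eqP uv]; move: uv_neq; rewrite uv eqxx.
- by move=> x; rewrite e !inE => /orP [->|->]; rewrite ?orbT.
- move=> x; rewrite !inE => /or4P [h1|/eqP ->|/eqP ->|h1].
  + by left; rewrite e !inE h1.
  + by right.
  + by right.
  + by left; rewrite e !inE h1 orbT.
- by rewrite !inE eqxx orbT.
- exact: cn.
Qed.

Lemma ins_step P : Valid P -> (exists w, forall j, w \notin P j) ->
  exists P', Valid P' /\ cover P < cover P'.
Proof.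
move=> hv [w0 w0n].
have hv' := hv; case: hv' => [hd hdis hdst [i0 hi0] hB].
pose Uc x := [forall j, x \notin P j].
have Ucn x : Uc x -> (x != u) && (x != v).
  move/forallP/(_ i0); have /andP [h1 h2] := valid_ends i0 hv.
  by apply: contraNT; rewrite negb_and !negbK => /orP [] /eqP ->.
have Ucw0 : Uc w0 by apply/forallP.
have [t0 et0] := dip_head hi0.
have vt0 : v \in t0.
  have hl := dip_last u hi0; rewrite et0 /= in hl.
  have := mem_last u t0; rewrite hl inE => /orP [/eqP e|//].
  by move: uv_neq; rewrite e eqxx.
case: (boolP [exists w, Uc w && tA w]).
  case/existsP => w /andP [/forallP wn /andP [uw wv]].
  apply: (ins1 (i := i0) (w := w) (s1 := [:: u]) (s2 := t0) hv) => //.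
  - by exists u; rewrite ?inE.
  - by exists v.
move=> /existsPn na.
case: (boolP [exists w, Uc w && tB w]).
  case/existsP => w /andP [/forallP wn hw]; have /andP [vw wu] := hw.
  have [i1 hi1] := hB (ex_intro _ w hw).
  have [t1 et1] := dip_head hi1.
  have ut1 : u \in t1.
    have hl := dip_last v hi1; rewrite et1 /= in hl.
    have := mem_last v t1; rewrite hl inE => /orP [/eqP e|//].
    by move: uv_neq; rewrite e eqxx.
  apply: (ins1 (i := i1) (w := w) (s1 := [:: v]) (s2 := t1) hv) => //.
  - by exists v; rewrite ?inE.
  - by exists u.
move=> /existsPn nb.
case: (boolP [exists w, exists y, [&& Uc w, tC w, (y != u) && (y != v), ~~ Uc y & arc w y]]).
  case/existsP => w /existsP [y /and5P [/forallP wn /andP [uw vw] /andP [yu yv] /forallPn [j] yj wy]].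
  rewrite negbK in yj.
  case/orP: (hd j) => hj.
  - exact: (case_c hv hj uw yj yu wy wn).
  - exact: (case_c hv hj vw yj yv wy wn).
move=> /existsPn nc.
case: (boolP [exists w, exists y, [&& Uc w, tD w, (y != u) && (y != v), ~~ Uc y & arc y w]]).
  case/existsP => w /existsP [y /and5P [/forallP wn /andP [wu wv] /andP [yu yv] /forallPn [j] yj yw]].
  rewrite negbK in yj.
  case/orP: (hd j) => hj.
  - exact: (case_d hv hj wv yj yv yw wn).
  - exact: (case_d hv hj wu yj yu yw wn).
move=> /existsPn nd.
case: (boolP [exists c, exists d, [&& Uc c, Uc d, tC c, tD d & arc c d]]).
  case/existsP => c /existsP [d /and5P [cu du hc hd' cd]].
  apply: (case_e hv hi0 cu du hc hd' cd) => y ny yu yv.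
  by apply/negP => yd; move: (nd d) => /existsPn /(_ y); rewrite du hd' yu yv ny yd.
move=> /existsPn ne.
exfalso.
have s0 : #|(set0 : {set V})| < 2 * k by rewrite cards0; lia.
have st := strong s0.
have n0 x : x \notin (set0 : {set V}) by rewrite in_set0.
case: (boolP [exists c, Uc c && tC c]).
  case/existsP => c /andP [cu cc].
  pose Z := [pred x | Uc x && tC x].
  have cl : forall a b, [rel a b | [&& arc a b, a \notin (set0 : {set V}) & b \notin (set0 : {set V})]] a b -> Z a -> Z b.
    move=> a b /= /andP [ab _] /andP [au /andP [ua va]].
    have bu : b != u by apply/eqP => e; subst b; apply: (arc_asym tour ua ab).
    have bv : b != v by apply/eqP => e; subst b; apply: (arc_asym tour va ab).
    have bU : Uc b.
      apply: contraT => nbU; move: (nc a) => /existsPn /(_ b).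
      by rewrite au /tC ua va bu bv nbU ab.
    rewrite bU /=; case/or4P: (four bu bv) => [h|h|//|h].
    - by move: (na b); rewrite bU h.
    - by move: (nb b); rewrite bU h.
    - by move: (ne a) => /existsPn /(_ b); rewrite au bU /tC ua va h ab.
  have := connect_fwd cl (st c u (n0 c) (n0 u)).
  by rewrite /= cu cc /tC (arc_irr tour) andbF => /(_ isT).
move=> /existsPn nC.
have /andP [w0u w0v] := Ucn w0 Ucw0.
have w0D : tD w0.
  case/or4P: (four w0u w0v) => [h|h|h|//].
  - by move: (na w0); rewrite Ucw0 h.
  - by move: (nb w0); rewrite Ucw0 h.
  - by move: (nC w0); rewrite Ucw0 h.
pose Z := [pred x | Uc x && tD x].
have cl : forall a b, [rel a b | [&& arc a b, a \notin (set0 : {set V}) & b \notin (set0 : {set V})]] a b -> Z b -> Z a.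
  move=> a b /= /andP [ab _] /andP [bU /andP [bu bv]].
  have au : a != u by apply/eqP => e; subst a; apply: (arc_asym tour bu ab).
  have av : a != v by apply/eqP => e; subst a; apply: (arc_asym tour bv ab).
  have aU : Uc a.
    apply: contraT => naU; move: (nd b) => /existsPn /(_ a).
    by rewrite bU /tD bu bv au av naU ab.
  rewrite aU /=; case/or4P: (four au av) => [h|h|h|//].
  - by move: (na a); rewrite aU h.
  - by move: (nb a); rewrite aU h.
  - by move: (ne a) => /existsPn /(_ b); rewrite aU bU h /tD bu bv ab.
have Zw0 : Z w0 by rewrite /= Ucw0 w0D.
have := connect_bwd cl (st u w0 (n0 u) (n0 w0)) Zw0.
by rewrite /= /tD (arc_irr tour) andbF.
Qed.


Lemma mem_nth_flat (L : seq (seq V)) j x : x \in nth [::] L j -> x \in flatten L.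
Proof.
elim: L j => [|s L IH] [|j] //=; rewrite mem_cat.
  by move=> ->.
by move/IH => ->; rewrite orbT.
Qed.

Lemma flatten_disj (L : seq (seq V)) i j x : uniq (flatten L) -> i != j ->
  x \in nth [::] L i -> x \in nth [::] L j -> False.
Proof.
elim: L i j => [|s L IH] i j; first by rewrite !nth_nil.
rewrite /= cat_uniq => /and3P [_ hn uf].
case: i => [|i]; case: j => [|j] //= ne.
- move=> xs /mem_nth_flat xf; by move/hasP: hn; apply; exists x.
- move=> /mem_nth_flat xf xs; by move/hasP: hn; apply; exists x.
- exact: IH.
Qed.

Definition mk (s : seq V) := if vu s then v :: s ++ [:: u] else u :: s ++ [:: v].

Lemma mem_mk x s : x \in mk s -> [|| x == u, x == v | x \in s].
Proof.
rewrite /mk; case: ifP => _; rewrite !inE mem_cat !inE.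
  by case/or3P => ->; rewrite ?orbT.
by case/or3P => ->; rewrite ?orbT.
Qed.

Lemma mem_mk2 x s : x \in s -> x \in mk s.
Proof. by rewrite /mk; case: ifP => _ xs; rewrite inE mem_cat xs ?orbT. Qed.

Lemma good_mk s : good s -> is_dipath arc u v (mk s) || is_dipath arc v u (mk s).
Proof.
move=> g; rewrite /mk; case: ifP => h; first by apply/orP; right.
apply/orP; left; case/orP: g => // h'; by move: h; rewrite /vu h'.
Qed.

Lemma good_nil : good [::].
Proof. by apply/orP; left; rewrite /is_dipath /= huv !inE uv_neq eqxx /= eqxx. Qed.

Lemma conv I : size I = k.+1 -> Inv I -> exists P, Valid P.
Proof.
move=> sI [ag an /and3P [uf uf' vf'] sz hb].
pose L := [::] :: I.
have sL : size L = k + 2 by rewrite /= sI addn2.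
have agL : all good L by rewrite /= good_nil.
pose P := fun i : 'I_(k+2) => mk (nth [::] L i).
have dis : forall i j : 'I_(k+2), i != j -> forall x, x \in P i -> x \in P j -> x = u \/ x = v.
  move=> i j ne x /mem_mk /or3P [/eqP ->|/eqP ->|xi]; [by left|by right|].
  move=> /mem_mk /or3P [/eqP ->|/eqP ->|xj]; [by left|by right|].
  exfalso; apply: (flatten_disj (L := L) (i := i) (j := j) (x := x)) => //.
exists P; split.
- move=> i; apply: good_mk; apply: (allP agL); apply: mem_nth; rewrite sL; exact: ltn_ord.
- exact: dis.
- have key : forall i j : 'I_(k+2), i != j -> nat_of_ord i != 0 -> P i != P j.
    move=> i j ne i0; apply/eqP => e.
    have ni : nth [::] L i != [::].
      move: i0 (ltn_ord i); rewrite /L; case: (nat_of_ord i) => [|i'] //= _ hi.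
      apply: (allP an); apply: mem_nth; move: hi; rewrite sI; lia.
    have [x [s ex]] : exists x s, nth [::] L i = x :: s.
      by case: (nth [::] L i) ni => [|x s] // _; exists x, s.
    have xP : x \in P i by rewrite /P ex mem_mk2 // mem_head.
    have xf : x \in flatten L by apply: (mem_nth_flat (j := i)); rewrite ex mem_head.
    have xQ : x \in P j by rewrite -e.
    case: (dis i j ne x xP xQ) => xe; subst x.
    + by move: uf'; rewrite xf.
    + by move: vf'; rewrite xf.
  move=> i j ne; case: (eqVneq (nat_of_ord i) 0) => hi.
    rewrite eq_sym; apply: key; first by rewrite eq_sym.
    by apply: contraNneq ne => hj; apply/eqP; apply: val_inj; rewrite /= hi hj.
  exact: key.
- have h0 : 0 < k + 2 by rewrite addn2.
  exists (Ordinal h0); rewrite /P /= /mk.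
  have -> : vu [::] = false.
    by rewrite /vu /=; apply/negbTE; apply/negP => /andP [_ /andP [/andP [h _] _]]; apply: (arc_asym tour huv h).
  by rewrite /is_dipath /= huv !inE uv_neq eqxx /= eqxx.
- move/hb => /hasP [s sI' vs].
  have hi : (index s I).+1 < k + 2 by rewrite addn2 ltnS -sI index_mem.
  exists (Ordinal hi); rewrite /P /= nth_index // /mk vs.
  exact: vs.
Qed.


Lemma full : forall n P, Valid P -> #|V| - cover P <= n ->
  exists P', Valid P' /\ forall x, exists i, x \in P' i.
Proof.
elim=> [|n IH] P hv hn;
  (case: (boolP [forall x, [exists i, x \in P i]]);
    [move/forallP => h; exists P; split => // x; by have /existsP := h x|]);
  move/forallPn => [w /existsPn wn];
  have [P' [hv' lt]] := ins_step hv (ex_intro _ w wn);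
  have cm : cover P' <= #|V| by apply: max_card.
  lia.
apply: (IH P') => //; lia.
Qed.

Lemma main_uv : weak_container arc (k+2) u v.
Proof.
have [I [sI hI]] := grow (ltn0Sn k) (leqnn _).
have [P hv] := conv sI hI.
have [P' [[hd hdis hdst _ _] hc]] := full hv (leqnn (#|V| - cover P)).
by exists P'; split.
Qed.

End UV.

Lemma wc_sym (V : finType) (arc : rel V) n a b : weak_container arc n a b -> weak_container arc n b a.
Proof.
case=> P [h1 h2 h3 h4]; exists P; split => //.
- by move=> i; rewrite orbC.
- by move=> i j ne x xi xj; case: (h3 i j ne x xi xj); [right|left].
Qed.

Theorem proposition2p8 (V : finType) (arc : rel V) (k : nat) :
  1 <= k ->
  tournament arc ->
  m_strong arc (2 * k) ->
  (forall x y : V, x != y ->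
     exists z : V, (arc x z && arc z y) || (arc y z && arc z x)) ->
  weakly_connected_star arc (k + 2).
Proof.
move=> hk tour [_ hs] two u v ne.
case/orP: (arc_tot tour ne) => h.
  exact: (main_uv tour h hk hs (two u v ne)).
apply: wc_sym; apply: (main_uv tour h hk hs).
by rewrite eq_sym in ne; exact: (two v u ne).
Qed.
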